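(* Let $m\geq 1$ be an integer. For all integers $n\geq 1$ and all real $x\in(0,\pi)$, $$\sum_{k=0}^n \binom{n-k+m}{m}\cos\bigl((k+1/2)x\bigr)>\begin{cases}-1/4, & m=1,\\ 0, & m\geq 2,\end{cases}$$ and $$\sum_{k=0}^n \binom{n-k+m}{m}\sin\bigl((k+1/2)x\bigr)>0.$$ All these lower bounds are sharp (the best possible constants valid for all $n\ge 1$, $x\in(0,\pi)$, for each fixed $m$ in the respective case). *)

(* Defs.v *)
From Stdlib Require Import Reals.
Open Scope R_scope.

Fixpoint binom (n k : nat) : nat :=
  match n, k with
  | _, O => 1%nat
  | O, S _ => 0%nat
  | S n', S k' => (binom n' k' + binom n' k)%nat
  end.

Definition cosBinSum (m n : nat) (x : R) : R :=
  sum_f_R0 (fun k => INR (binom (n - k + m) m) * cos ((INR k + / 2) * x)) n.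

Definition sinBinSum (m n : nat) (x : R) : R :=
  sum_f_R0 (fun k => INR (binom (n - k + m) m) * sin ((INR k + / 2) * x)) n.

Definition cosLowerBound (m : nat) : R := if Nat.eqb m 1 then - / 4 else 0.

(* Main.v *)
Require Import Defs.
From Stdlib Require Import Reals Lra Psatz Lia.
Open Scope R_scope.
Lemma divle t f a : 0 <= t <= a -> 1 <= f -> 0 <= t / f <= a.
Proof. intros. split. unfold Rdiv; apply Rmult_le_pos; [lra| apply Rlt_le, Rinv_0_lt_compat; lra].
 apply Rle_trans with t; [|lra]. unfold Rdiv. rewrite <- (Rmult_1_r t) at 2.
 apply Rmult_le_compat_l; [lra|]. rewrite <- Rinv_1. apply Rinv_le_contravar; lra. Qed.
Lemma powle a k : 0 <= a <= 1 -> 0 <= a ^ (S k) <= a.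
Proof. intros H. induction k. simpl; lra. simpl in *. nra. Qed.
Lemma sin_le3 a : 0 <= a <= 1 -> sin a <= 3 * a.
Proof. intros H. assert (a <= PI) by (pose proof PI2_3_2; lra).
destruct (SIN a) as [_ H2]; try lra. eapply Rle_trans; [exact H2|].
unfold sin_ub, sin_approx. rewrite !tech5. simpl sum_f_R0. unfold sin_term.
assert (F : forall k, 1 <= INR (Factorial.fact k)).
{ intro k. apply (le_INR 1). apply Factorial.lt_O_fact. }
simpl (2 * _ + 1)%nat. 
pose proof (divle _ _ _ (powle a 0 H) (F 1%nat)).
pose proof (divle _ _ _ (powle a 2 H) (F 3%nat)).
pose proof (divle _ _ _ (powle a 4 H) (F 5%nat)).
pose proof (divle _ _ _ (powle a 6 H) (F 7%nat)).
pose proof (divle _ _ _ (powle a 8 H) (F 9%nat)).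
simpl ((-1)^_). lra. Qed.
Lemma binom_n0 n : binom n 0 = 1%nat. Proof. destruct n; reflexivity. Qed.
Lemma binom_lt n k : (n < k)%nat -> binom n k = 0%nat.
Proof. revert k; induction n; intros k Hk; destruct k; simpl; try lia.
 rewrite !IHn; lia. Qed.
Lemma binom_nn n : binom n n = 1%nat.
Proof. induction n; simpl; auto. rewrite IHn, binom_lt; lia. Qed.

Definition G (g : nat -> R) m n := sum_f_R0 (fun k => INR (binom (n - k + m) m) * g k) n.

Lemma G_0 g m : G g m 0 = g 0%nat.
Proof. unfold G; simpl. rewrite binom_nn. simpl; ring. Qed.

Lemma G_zero g n : G g 0 n = sum_f_R0 g n.
Proof. unfold G. apply sum_eq. intros. rewrite binom_n0. simpl; ring. Qed.

Lemma G_succ g m n : G g (S m) (S n) = G g (S m) n + G g m (S n).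
Proof. unfold G. rewrite !tech5. rewrite Nat.sub_diag. simpl (0 + _)%nat.
 rewrite !binom_nn. rewrite <- Rplus_assoc, <- plus_sum.
 f_equal. apply sum_eq. intros k Hk.
 replace (S n - k + S m)%nat with (S (S n - k + m)) by lia.
 replace (n - k + S m)%nat with (S n - k + m)%nat by lia.
 change (binom (S (S n - k + m)) (S m)) with (binom (S n - k + m) m + binom (S n - k + m) (S m))%nat.
 rewrite plus_INR; ring. Qed.

Lemma G_lift_nonneg g m : (forall j, 0 <= G g m j) -> forall n, 0 <= G g (S m) n.
Proof. intros H n; induction n. rewrite G_0, <- (G_0 g m); auto.
 rewrite G_succ. specialize (H (S n)). lra. Qed.

Lemma G_lift_pos g m : (forall j, 0 <= G g m j) -> 0 < g 0%nat -> forall n, 0 < G g (S m) n.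
Proof. intros H H0 n; induction n. rewrite G_0; auto.
 rewrite G_succ. specialize (H (S n)). lra. Qed.

Lemma G_lift_pos' g m : (forall j, 0 < G g m j) -> forall n, 0 < G g (S m) n.
Proof. intros H n; induction n. rewrite G_0, <- (G_0 g m); auto.
 rewrite G_succ. specialize (H (S n)). lra. Qed.
Lemma K1 a b : 2 * sin b * cos a = sin (a + b) - sin (a - b).
Proof. rewrite sin_plus, sin_minus. ring. Qed.
Lemma K2 a b : 2 * sin b * sin a = cos (a - b) - cos (a + b).
Proof. rewrite cos_plus, cos_minus. ring. Qed.
Lemma sinx x : sin x = 2 * sin (x/2) * cos (x/2).
Proof. rewrite <- sin_2a. f_equal; field. Qed.
Lemma cosx x : cos x = 1 - 2 * sin (x/2) ^ 2.
Proof. replace x with (2 * (x/2)) at 1 by field. rewrite cos_2a_sin. ring. Qed.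

Lemma sinN x N : 0 <= sin x -> Rabs (sin (INR N * x)) <= INR N * sin x.
Proof. intros H. induction N. simpl. rewrite Rmult_0_l, sin_0, Rabs_R0. lra.
 rewrite S_INR, Rmult_plus_distr_r, Rmult_1_l, sin_plus.
 eapply Rle_trans. apply Rabs_triang. rewrite !Rabs_mult.
 pose proof (COS_bound x). pose proof (COS_bound (INR N * x)).
 assert (Rabs (cos x) <= 1) by (apply Rabs_le; lra).
 assert (Rabs (cos (INR N * x)) <= 1) by (apply Rabs_le; lra).
 rewrite (Rabs_right (sin x)) by lra.
 pose proof (Rabs_pos (sin (INR N * x))). pose proof (Rabs_pos (cos x)).
 assert (Rabs (sin (INR N * x)) * Rabs (cos x) <= Rabs (sin (INR N * x))) by
   (rewrite <- (Rmult_1_r (Rabs (sin (INR N * x)))) at 2; apply Rmult_le_compat_l; lra).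
 assert (Rabs (cos (INR N * x)) * sin x <= sin x) by
   (rewrite <- (Rmult_1_l (sin x)) at 2; apply Rmult_le_compat_r; lra).
 lra. Qed.

Lemma sinN_strict x N : 0 < sin x -> Rabs (cos x) < 1 -> (2 <= N)%nat ->
  sin (INR N * x) < INR N * sin x.
Proof. intros H Hc HN. destruct N as [|N]; [lia|].
 rewrite S_INR, Rmult_plus_distr_r, Rmult_1_l, sin_plus.
 pose proof (sinN x N (Rlt_le _ _ H)).
 assert (1 <= INR N) by (apply (le_INR 1); lia).
 pose proof (COS_bound (INR N * x)).
 pose proof (Rle_abs (sin (INR N * x) * cos x)). rewrite Rabs_mult in H3.
 pose proof (Rabs_pos (sin (INR N * x))). pose proof (Rabs_pos (cos x)).
 assert (Rabs (sin (INR N * x)) * Rabs (cos x) <= INR N * sin x * Rabs (cos x)) by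
   (apply Rmult_le_compat_r; lra).
 assert (INR N * sin x * Rabs (cos x) < INR N * sin x) by
   (rewrite <- (Rmult_1_r (INR N * sin x)) at 2; apply Rmult_lt_compat_l; [apply Rmult_lt_0_compat|]; lra).
 assert (cos (INR N * x) * sin x <= sin x) by
   (rewrite <- (Rmult_1_l (sin x)) at 2; apply Rmult_le_compat_r; lra).
 lra. Qed.

Definition gc x k := cos ((INR k + / 2) * x).
Definition gs x k := sin ((INR k + / 2) * x).

Lemma L0c x n : 2 * sin (x/2) * G (gc x) 0 n = sin ((INR n + 1) * x).
Proof. rewrite G_zero. induction n.
 - simpl. unfold gc. simpl. replace ((0 + /2) * x) with (x/2) by field.
   replace ((0+1)*x) with x by ring. rewrite (sinx x). ring.
 - rewrite tech5, Rmult_plus_distr_l, IHn. unfold gc. rewrite K1, S_INR.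
   replace ((INR n + 1 + / 2) * x + x / 2) with ((INR n + 1 + 1) * x) by field.
   replace ((INR n + 1 + / 2) * x - x / 2) with ((INR n + 1) * x) by field. ring.
Qed.

Lemma L0s x n : 2 * sin (x/2) * G (gs x) 0 n = 1 - cos ((INR n + 1) * x).
Proof. rewrite G_zero. induction n.
 - simpl. unfold gs. simpl. rewrite (cosx ((0+1)*x)). replace ((0 + /2) * x) with (x/2) by field.
   replace ((0+1)*x/2) with (x/2) by field. ring.
 - rewrite tech5, Rmult_plus_distr_l, IHn. unfold gs. rewrite K2, S_INR.
   replace ((INR n + 1 + / 2) * x + x / 2) with ((INR n + 1 + 1) * x) by field.
   replace ((INR n + 1 + / 2) * x - x / 2) with ((INR n + 1) * x) by field. ring.
Qed.

Lemma L1 x n : 4 * sin (x/2) ^ 2 * G (gc x) 1 n = cos (x/2) - cos ((INR n + 3/2) * x).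
Proof. induction n.
 - rewrite G_0. unfold gc. simpl INR.
   replace ((0 + /2) * x) with (x/2) by field.
   replace (4 * sin (x/2) ^ 2 * cos (x/2)) with (2 * sin (x/2) * sin x) by (rewrite (sinx x); ring).
   rewrite K2. f_equal; f_equal; field.
 - rewrite G_succ, Rmult_plus_distr_l, IHn.
   replace (4 * sin (x / 2) ^ 2 * G (gc x) 0 (S n)) with (2 * sin (x/2) * (2 * sin (x / 2) * G (gc x) 0 (S n))) by ring.
   rewrite L0c, K2, S_INR.
   replace ((INR n + 1 + 1) * x - x / 2) with ((INR n + 3/2) * x) by field.
   replace ((INR n + 1 + 1) * x + x / 2) with ((INR n + 1 + 3/2) * x) by field. ring.
Qed.

Lemma L2 x n : 8 * sin (x/2) ^ 3 * G (gc x) 2 n = (INR n + 2) * sin x - sin ((INR n + 2) * x).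
Proof. induction n.
 - rewrite G_0. unfold gc. simpl INR.
   replace ((0 + /2) * x) with (x/2) by field.
   replace ((0+2)*x) with (2 * x) by ring. rewrite sin_2a, (cosx x), (sinx x). ring.
 - rewrite G_succ, Rmult_plus_distr_l, IHn.
   replace (8 * sin (x / 2) ^ 3 * G (gc x) 1 (S n)) with (2 * sin (x/2) * (4 * sin (x / 2)^2 * G (gc x) 1 (S n))) by ring.
   rewrite L1, Rmult_minus_distr_l, S_INR.
   replace (2 * sin (x/2) * cos (x/2)) with (sin x) by (rewrite (sinx x); ring).
   rewrite K1.
   replace ((INR n + 1 + 3/2) * x + x / 2) with ((INR n + 1 + 2) * x) by field.
   replace ((INR n + 1 + 3/2) * x - x / 2) with ((INR n + 2) * x) by field. ring.
Qed.

Lemma facts x : 0 < x < PI -> 0 < sin (x/2) /\ 0 < cos (x/2) /\ sin (x/2) ^ 2 + cos (x/2) ^ 2 = 1.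
Proof. intros H. split; [apply sin_gt_0; lra|]. split; [apply cos_gt_0; lra|].
 pose proof (sin2_cos2 (x/2)). unfold Rsqr in H0. lra. Qed.

Lemma sin_pos_all x m n : 0 < x < PI -> (1 <= m)%nat -> 0 < G (gs x) m n.
Proof. intros Hx Hm. destruct (facts x Hx) as (Hs & Hc & Hsc).
 assert (N : forall m j, 0 <= G (gs x) m j).
 { induction m0. intro j. pose proof (L0s x j). pose proof (COS_bound ((INR j + 1) * x)).
   assert (0 <= 2 * sin (x/2) * G (gs x) 0 j) by lra. nra.
   apply G_lift_nonneg; auto. }
 destruct m as [|m]; [lia|]. apply G_lift_pos; auto. unfold gs. simpl INR.
 replace ((0 + /2) * x) with (x/2) by field. auto. Qed.

Lemma cos1 x n : 0 < x < PI -> G (gc x) 1 n > - / 4.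
Proof. intros Hx. destruct (facts x Hx) as (Hs & Hc & Hsc).
 pose proof (L1 x n). pose proof (COS_bound ((INR n + 3/2) * x)).
 assert (cos (x/2) < 1) by nra.
 assert (0 < sin (x/2) ^ 2) by nra.
 assert (sin (x/2) ^ 2 * (4 * G (gc x) 1 n + 1) > 0) by nra. nra. Qed.

Lemma cos2 x n : 0 < x < PI -> 0 < G (gc x) 2 n.
Proof. intros Hx. destruct (facts x Hx) as (Hs & Hc & Hsc).
 pose proof (L2 x n).
 assert (0 < sin x) by (apply sin_gt_0; lra).
 assert (Rabs (cos x) < 1). { rewrite (cosx x). apply Rabs_def1; nra. }
 pose proof (sinN_strict x (n + 2) H0 H1 ltac:(lia)). rewrite plus_INR in H2. simpl (INR 2) in H2.
 replace (1+1) with 2 in H2 by ring.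
 assert (0 < sin (x/2) ^ 3) by (apply pow_lt; auto). nra. Qed.

Lemma cos_ge2 x m n : 0 < x < PI -> (2 <= m)%nat -> 0 < G (gc x) m n.
Proof. intros Hx Hm. revert n. induction m as [|m IH]; [lia|].
 destruct (Nat.eq_dec m 1) as [->|Hne]. intro; apply cos2; auto.
 apply G_lift_pos'. apply IH. lia. Qed.

Lemma n1_form (f : R -> R) m x :
  sum_f_R0 (fun k => INR (binom (1 - k + m) m) * f ((INR k + / 2) * x)) 1
  = INR (binom (S m) m) * f (x/2) + f (3 * x / 2).
Proof. rewrite tech5. cbn [sum_f_R0]. replace (1 - 1 + m)%nat with m by lia.
 replace (1 - 0 + m)%nat with (S m) by lia.
 rewrite binom_nn, INR_0, INR_1. replace ((0 + /2) * x) with (x/2) by field.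
 replace ((1 + /2) * x) with (3 * x / 2) by field. ring. Qed.

Lemma sin_sharp m eps : eps > 0 -> exists x, 0 < x < PI /\ sinBinSum m 1 x < eps.
Proof. intros He. unfold sinBinSum. set (B := INR (binom (S m) m)).
 assert (HB : 0 <= B) by apply pos_INR.
 exists (Rmin (1/2) (eps / (6 * B + 10))).
 assert (0 < eps / (6*B+10)) by (apply Rdiv_lt_0_compat; lra).
 set (x := Rmin (1/2) (eps / (6 * B + 10))).
 assert (x <= 1/2) by apply Rmin_l. assert (x <= eps / (6 * B + 10)) by apply Rmin_r.
 assert (0 < x) by (apply Rmin_glb_lt; lra).
 pose proof PI2_3_2. split. lra.
 rewrite (n1_form sin). fold B.
 pose proof (sin_le3 (x/2) ltac:(lra)). pose proof (sin_le3 (3*x/2) ltac:(lra)).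
 assert (x * (6*B+10) <= eps).
 { apply (Rmult_le_compat_r (6*B+10)) in H1; [|lra]. unfold Rdiv in H1.
   rewrite Rmult_assoc, Rinv_l, Rmult_1_r in H1; lra. }
 nra. Qed.

Lemma cos_sharp0 m eps : eps > 0 -> exists x, 0 < x < PI /\ cosBinSum m 1 x < eps.
Proof. intros He. unfold cosBinSum. set (B := INR (binom (S m) m)).
 assert (HB : 0 <= B) by apply pos_INR.
 assert (0 < eps / (3 * B + 3)) by (apply Rdiv_lt_0_compat; lra).
 set (d := Rmin (1/2) (eps / (3 * B + 3))).
 assert (d <= 1/2) by apply Rmin_l. assert (d <= eps / (3 * B + 3)) by apply Rmin_r.
 assert (0 < d) by (apply Rmin_glb_lt; lra).
 exists (PI - d). pose proof PI2_3_2. split. lra.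
 rewrite (n1_form cos). fold B.
 replace ((PI - d)/2) with (PI/2 - d/2) by field. rewrite cos_shift.
 replace (3 * (PI - d) / 2) with ((PI/2 - 3 * d / 2) + PI) by field. rewrite neg_cos, cos_shift.
 pose proof (sin_le3 (d/2) ltac:(lra)). pose proof (sin_ge_0 (3*d/2) ltac:(lra) ltac:(lra)).
 assert (d * (3*B+3) <= eps).
 { apply (Rmult_le_compat_r (3*B+3)) in H1; [|lra]. unfold Rdiv in H1.
   rewrite Rmult_assoc, Rinv_l, Rmult_1_r in H1; lra. }
 nra. Qed.

Lemma cos_sharp1 eps : eps > 0 -> exists n x, (1 <= n)%nat /\ 0 < x < PI /\ G (gc x) 1 n < - / 4 + eps.
Proof. intros He.
 destruct (archimed_cor1 (Rmin (eps/100) (1/100))) as [j [Hj Hj0]].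
 { apply Rmin_glb_lt; lra. }
 pose proof (Rmin_l (eps/100) (1/100)). pose proof (Rmin_r (eps/100) (1/100)).
 set (J := INR j) in *.
 assert (HJ1 : 1 <= J) by (apply (le_INR 1); lia).
 assert (HJa : / J < eps / 100) by lra. assert (HJb : / J < 1/100) by lra.
 assert (J * eps > 100).
 { apply (Rmult_lt_compat_l J) in HJa; [|lra]. rewrite Rinv_r in HJa by lra. lra. }
 assert (J > 100).
 { apply (Rmult_lt_compat_l J) in HJb; [|lra]. rewrite Rinv_r in HJb by lra. lra. }
 exists (2 * j - 1)%nat, (4 * PI * J / (4 * J + 1)).
 pose proof PI_RGT_0. pose proof PI_4.
 split; [lia|]. split.
 { split. apply Rdiv_lt_0_compat; nra.
   apply (Rmult_lt_reg_r (4*J+1)); [lra|]. unfold Rdiv. rewrite Rmult_assoc, Rinv_l by lra. nra. }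
 set (x := 4 * PI * J / (4 * J + 1)).
 assert (Hx : 0 < x < PI).
 { split. apply Rdiv_lt_0_compat; nra.
   apply (Rmult_lt_reg_r (4*J+1)); [lra|]. unfold x, Rdiv. rewrite Rmult_assoc, Rinv_l by lra. nra. }
 destruct (facts x Hx) as (Hs & Hc & Hsc).
 pose proof (L1 x (2 * j - 1)).
 rewrite minus_INR, mult_INR in H5 by lia. fold J in H5. replace (INR 2) with 2 in H5 by (simpl; ring). rewrite INR_1 in H5.
 replace ((2 * J - 1 + 3/2) * x) with (0 + 2 * J * PI) in H5 by (unfold x; field; lra).
 unfold J in H5. rewrite cos_period, cos_0 in H5. fold J in H5.
 assert (Hc2 : cos (x/2) = sin (PI / (2 * (4 * J + 1)))).
 { rewrite <- cos_shift. f_equal. unfold x. field. lra. }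
 assert (0 <= PI / (2 * (4 * J + 1)) <= 1).
 { split. apply Rlt_le, Rdiv_lt_0_compat; lra.
   apply (Rmult_le_reg_r (2 * (4*J+1))); [lra|]. unfold Rdiv. rewrite Rmult_assoc, Rinv_l by lra. lra. }
 pose proof (sin_le3 _ H6). rewrite <- Hc2 in H7.
 assert (3 * (PI / (2 * (4 * J + 1))) * J <= 3 / 2).
 { unfold Rdiv. replace (3 * (PI * / (2 * (4 * J + 1))) * J) with (3 * PI * J / (2 * (4 * J + 1))) by (field; lra).
   apply (Rmult_le_reg_r (2 * (4*J+1))); [lra|]. unfold Rdiv. rewrite Rmult_assoc, Rinv_l by lra. nra. }
 set (c := cos (x/2)) in *. set (s := sin (x/2)) in *.
 assert (c * J <= 3/2) by nra.
 assert (c < eps /2) by nra.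
 assert (c <= 1/2) by nra.
 assert (0 < s ^ 2) by nra.
 assert (s ^ 2 * (G (gc x) 1 (2 * j - 1) + / 4 - eps) < 0) by nra.
 nra. Qed.

Theorem theorem2 (m : nat) (hm : (1 <= m)%nat) :
  (* the inequalities *)
  (forall (n : nat) (x : R), (1 <= n)%nat -> 0 < x < PI ->
     cosBinSum m n x > cosLowerBound m /\ sinBinSum m n x > 0)
  /\
  (* sharpness of the cosine bound *)
  (forall eps : R, eps > 0 ->
     exists (n : nat) (x : R), (1 <= n)%nat /\ 0 < x < PI /\
       cosBinSum m n x < cosLowerBound m + eps)
  /\
  (* sharpness of the sine bound *)
  (forall eps : R, eps > 0 ->
     exists (n : nat) (x : R), (1 <= n)%nat /\ 0 < x < PI /\
       sinBinSum m n x < eps).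
Proof.
  split.
  - intros n x Hn Hx. split.
    + change (cosBinSum m n x) with (G (gc x) m n).
      destruct (Nat.eqb_spec m 1) as [->|Hne].
      * unfold cosLowerBound. simpl. apply cos1; auto.
      * unfold cosLowerBound. rewrite (proj2 (Nat.eqb_neq _ _) Hne).
        apply cos_ge2; auto; lia.
    + change (sinBinSum m n x) with (G (gs x) m n). apply sin_pos_all; auto.
  - split.
    + intros eps He. destruct (Nat.eqb_spec m 1) as [->|Hne].
      * destruct (cos_sharp1 eps He) as (n & x & H1 & H2 & H3).
        exists n, x. split; [auto|]. split; [auto|]. unfold cosLowerBound; simpl. exact H3.
      * destruct (cos_sharp0 m eps He) as (x & H2 & H3).
        exists 1%nat, x. split; [auto|]. split; [auto|]. unfold cosLowerBound.
        rewrite (proj2 (Nat.eqb_neq _ _) Hne). lra.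
    + intros eps He. destruct (sin_sharp m eps He) as (x & H2 & H3).
      exists 1%nat, x. split; auto.
Qed.
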